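(* Let $\Gamma$ be a discrete group, $N$ a normal subgroup with finite quotient $\tilde\Gamma=\Gamma/N$, $r\ge1$, and $f=\sum_\gamma a_\gamma\gamma\in M_r(\mathbb{Z}\Gamma)$ with image $\tilde f=\sum_\gamma a_\gamma\tilde\gamma\in M_r(\mathbb{Z}\tilde\Gamma)$. Then $\rho_{\tilde f}$ is an automorphism of $(\mathbb{Q}\tilde\Gamma)^r$ if and only if $\mathrm{Fix}_N(X_f)$ is finite, and in this case $|\mathrm{Fix}_N(X_f)|=\pm\det\rho_{\tilde f}$.
   Context: $T=(\mathbb{R}/\mathbb{Z})^r$. For $f=\sum_\gamma a_\gamma\gamma$ with $a_\gamma\in M_r(\mathbb{Z})$ (almost all zero), $X_f\subset T^\Gamma$ is the closed subgroup of all $(x_{\gamma'})$ (entries as row vectors) with $\sum_{\gamma'}x_{\gamma'}a^T_{\gamma^{-1}\gamma'}=0$ in $T$ for all $\gamma$, where $a^T$ is the transpose; $\Gamma$ acts by $\gamma\cdot(x_{\gamma'})=(x_{\gamma^{-1}\gamma'})$, and $\mathrm{Fix}_N(X_f)$ is the set of points fixed by every element of $N$. For a finite group $G$, a field $K\supseteq\mathbb{Q}$ and $h=\sum_g b_g g\in M_r(KG)$, set $h^*=\sum_g b^T_{g^{-1}}g$; $\rho_h$ is the $K$-linear endomorphism $x\mapsto xh^*$ of $(KG)^r$ (row vectors), and $\det\rho_h$ its determinant over $K$. *)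

(* Defs.v *)
From HB Require Import structures.
From mathcomp Require Import all_boot all_order all_algebra all_fingroup.
From mathcomp Require Import all_classical all_reals.
Set Implicit Arguments. Unset Strict Implicit. Unset Printing Implicit Defensive.
Import Order.TTheory GRing.Theory Num.Theory.
Local Open Scope ring_scope.

(* An element f = sum_gamma a_gamma gamma of M_r(Z Gamma) is given by a finite
   list of pairs (gamma_i, A_i) with f = sum_i A_i gamma_i (repetitions allowed,
   so that a_gamma = sum_{i | gamma_i = gamma} A_i). *)
Definition ZGmat (Gam : groupType) (r : nat) := seq (Gam * 'M[int]_r)%type.

(* The torus T = (R/Z)^r: an element is represented by its unique
   representative row vector with entries in [0,1). *)
Definition torus_rep (R : realType) (r : nat) (v : 'rV[R]_r) : Prop :=
  forall j, 0 <= v 0 j /\ v 0 j < 1.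

(* X_f: all (x_gamma') in T^Gamma with sum_gamma' x_gamma' a^T_{gamma^-1 gamma'} = 0
   in T for every gamma.  Substituting gamma' = gamma * gamma_i, this sum is
   sum_i x_{gamma gamma_i} A_i^T, and it vanishes in R/Z iff all coordinates of
   the real sum are integers. *)
Definition Xf (R : realType) (Gam : groupType) (r : nat) (f : ZGmat Gam r)
  : set (Gam -> 'rV[R]_r) :=
  [set x | (forall g, torus_rep (x g)) /\
     forall g : Gam, forall j : 'I_r,
       (\sum_(p <- f) (x (g * p.1)%g *m (map_mx (fun z : int => z%:~R) p.2)^T)) 0 j
         \is a Num.int].

Definition FixN (R : realType) (Gam : groupType) (r : nat) (N : set Gam)
  (X : set (Gam -> 'rV[R]_r)) : set (Gam -> 'rV[R]_r) :=
  [set x | X x /\ forall n, N n -> forall g, x (n^-1 * g)%g = x g].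

(* Group algebra K G for a finite group G, elements = coefficient functions. *)
Definition ga_mul (K : fieldType) (G : finGroupType) (p q : G -> K) : G -> K :=
  fun u => \sum_(g : G) p g * q (g^-1 * u)%g.

(* h = sum_g b_g g in M_r(KG) is given by b : G -> 'M_r; h^* = sum_g b^T_{g^-1} g *)
Definition hstar (K : fieldType) (G : finGroupType) (r : nat) (b : G -> 'M[K]_r)
  : G -> 'M[K]_r := fun g => (b g^-1%g)^T.

(* rho_h : (KG)^r -> (KG)^r, x |-> x h^*  (x a row vector of elements of KG) *)
Definition rho (K : fieldType) (G : finGroupType) (r : nat) (b : G -> 'M[K]_r)
  (x : 'I_r -> G -> K) : 'I_r -> G -> K :=
  fun k => fun u => \sum_(j < r) ga_mul (x j) (fun g => hstar b g j k) u.

Definition ga_coord (K : fieldType) (G : finGroupType) (r : nat)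
  (x : 'I_r -> G -> K) : 'rV[K]_#|{: 'I_r * G}| :=
  \row_i (let p := enum_val i in x p.1 p.2).
Definition ga_uncoord (K : fieldType) (G : finGroupType) (r : nat)
  (v : 'rV[K]_#|{: 'I_r * G}|) : 'I_r -> G -> K :=
  fun j g => v 0 (enum_rank (j, g)).

Definition det_rho (K : fieldType) (G : finGroupType) (r : nat) (b : G -> 'M[K]_r) : K :=
  \det (lin1_mx (fun v => ga_coord (rho b (ga_uncoord v)))).

Definition ftilde (Gam : groupType) (G : finGroupType) (r : nat)
  (phi : Gam -> G) (f : ZGmat Gam r) : G -> 'M[rat]_r :=
  fun g => \sum_(p <- f | phi p.1 == g) map_mx (fun z : int => z%:~R) p.2.

(* Main.v *)
Require Import Defs.
From HB Require Import structures.
From mathcomp Require Import all_boot all_order all_algebra all_fingroup.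
From mathcomp Require Import all_classical all_reals.
From mathcomp Require Import ring lra.
Import Order.TTheory GRing.Theory Num.Theory.
Set Implicit Arguments. Unset Strict Implicit. Unset Printing Implicit Defensive.
Local Open Scope ring_scope.
Local Open Scope classical_set_scope.
Local Open Scope card_scope.
Lemma card_eq_inv T U (A : set T) (B : set U) (f : T -> U) (g : U -> T) :
  (forall x, A x -> B (f x)) -> (forall y, B y -> A (g y)) ->
  (forall x, A x -> g (f x) = x) -> (forall y, B y -> f (g y) = y) -> A #= B.
Proof.
move=> hf hg gf fg.
have -> : B = f @` A.
  apply/seteqP; split=> [y By|_ [x Ax <-]]; last exact: hf.
  by exists (g y); [apply: hg|apply: fg].
apply/card_esym/inj_card_eq => x y /set_mem Ax /set_mem Ay e.
by rewrite -(gf _ Ax) -(gf _ Ay) e.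
Qed.

Section Count.
Variable R : realType.
Notation mi := (map_mx (fun z : int => z%:~R)).

Definition intv m (v : 'rV[R]_m) := forall j, v 0 j \is a Num.int.
Definition SS m (M : 'M[int]_m) : set 'rV[R]_m :=
  [set v | torus_rep v /\ intv (v *m mi M)].

Lemma intvD m (v w : 'rV[R]_m) : intv v -> intv w -> intv (v + w).
Proof. by move=> hv hw j; rewrite mxE rpredD. Qed.
Lemma intvN m (v : 'rV[R]_m) : intv v -> intv (- v).
Proof. by move=> hv j; rewrite mxE rpredN. Qed.
Lemma intv_mul m n (v : 'rV[R]_m) (P : 'M[int]_(m, n)) : intv v -> intv (v *m mi P).
Proof.
move=> hv j; rewrite mxE; apply: rpred_sum => k _.
by rewrite mxE rpredM // intr_int.
Qed.

Definition floorv m (v : 'rV[R]_m) : 'rV[R]_m := \row_j ((Num.floor (v 0 j))%:~R).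
Definition fracv m (v : 'rV[R]_m) := v - floorv v.

Lemma intv_floorv m (v : 'rV[R]_m) : intv (floorv v).
Proof. by move=> j; rewrite mxE intr_int. Qed.

Lemma torus_frac m (v : 'rV[R]_m) : torus_rep (fracv v).
Proof.
move=> j; rewrite !mxE subr_ge0 floor_le; split => //.
have := floorD1_gt (v 0 j); rewrite intrD => h.
by rewrite ltrBlDl.
Qed.

Lemma fracv_id m (v : 'rV[R]_m) : torus_rep v -> fracv v = v.
Proof.
move=> hv; apply/matrixP => i j; rewrite !mxE.
have [h0 h1] := hv j; rewrite [i]ord1.
by rewrite (@floor_def _ _ 0) ?subr0 // h0 /= add0r.
Qed.

Lemma fracvD m (v w : 'rV[R]_m) : intv w -> fracv (v + w) = fracv v.
Proof.
move=> hw; apply/matrixP => i j; rewrite [i]ord1 !mxE floorDrz // intrD (floorK (hw j)).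
by rewrite opprD addrACA subrr addr0.
Qed.

Lemma fracvM m n (v : 'rV[R]_m) (A : 'M[int]_(m, n)) :
  fracv (fracv v *m mi A) = fracv (v *m mi A).
Proof.
rewrite [fracv v]/fracv mulmxBl fracvD //.
by apply/intvN/intv_mul/intv_floorv.
Qed.

Lemma intv_fracv m (v : 'rV[R]_m) : intv (v - fracv v).
Proof. by rewrite /fracv opprB addrC subrK; apply: intv_floorv. Qed.

Lemma intv_fracv_mul m n (v : 'rV[R]_m) (A : 'M[int]_(m, n)) :
  intv (v *m mi A) -> intv (fracv v *m mi A).
Proof.
move=> h; rewrite [fracv v]/fracv mulmxBl; apply: intvD => //.
by apply/intvN/intv_mul/intv_floorv.
Qed.

Lemma mi_inv m (P : 'M[int]_m) : P \in unitmx -> mi P *m mi (invmx P) = 1%:M :> 'M[R]_m.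
Proof. by move=> uP; rewrite -map_mxM mulmxV // map_mx1. Qed.
Lemma mi_inv' m (P : 'M[int]_m) : P \in unitmx -> mi (invmx P) *m mi P = 1%:M :> 'M[R]_m.
Proof. by move=> uP; rewrite -map_mxM mulVmx // map_mx1. Qed.

Lemma SS_right m (M Q : 'M[int]_m) : Q \in unitmx -> SS (M *m Q) = SS M.
Proof.
move=> uQ; apply/seteqP; split => v [tv hv]; split => //.
  have := intv_mul (invmx Q) hv.
  by rewrite map_mxM mulmxA -(mulmxA _ (mi Q)) mi_inv // mulmx1.
by rewrite map_mxM mulmxA; apply: intv_mul.
Qed.

Lemma SS_left m (P M : 'M[int]_m) : P \in unitmx -> SS (P *m M) #= SS M.
Proof.
move=> uP.
apply: (@card_eq_inv _ _ _ _ (fun y => fracv (y *m mi P)) (fun z => fracv (z *m mi (invmx P)))).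
- move=> y [ty hy]; split; first exact: torus_frac.
  by apply: intv_fracv_mul; move: hy; rewrite map_mxM mulmxA.
- move=> z [tz hz]; split; first exact: torus_frac.
  apply: intv_fracv_mul; rewrite map_mxM mulmxA -(mulmxA z) mi_inv' // mulmx1.
  exact: hz.
- move=> y [ty hy]; rewrite fracvM -mulmxA mi_inv // mulmx1 fracv_id //.
- move=> z [tz hz]; rewrite fracvM -mulmxA mi_inv' // mulmx1 fracv_id //.
Qed.
End Count.
Section Diag.
Variable R : realType.
Notation mi := (map_mx (fun z : int => z%:~R)).
Notation SS := (@SS R).

Definition dmx m (d : seq int) : 'M[int]_m := \matrix_(i, j) (d`_i *+ (i == j :> nat)).

Lemma dmx_mul m (d : seq int) (v : 'rV[R]_m) j :
  (v *m mi (dmx m d)) 0 j = v 0 j * (d`_j)%:~R.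
Proof.
have -> : mi (dmx m d) = diag_mx (\row_i ((d`_i)%:~R : R)).
  apply/matrixP => i k; rewrite !mxE; case: (i =P k) => [->|ne].
    by rewrite eqxx !mulr1n.
  have /negbTE -> : (i : nat) != k by apply/eqP => /val_inj.
  by rewrite !mulr0n.
by rewrite mul_mx_diag !mxE.
Qed.

Lemma SS_diag_inf m (d : seq int) (j0 : 'I_m) : d`_j0 = 0 -> infinite_set (SS (dmx m d)).
Proof.
move=> d0.
pose f (n : nat) : 'rV[R]_m := \row_j (if j == j0 then (n.+2%:R)^-1 else 0).
have fS : f @` [set: nat] `<=` SS (dmx m d).
  move=> _ [n _ <-]; split.
    move=> j; rewrite mxE; case: (j == j0); last by rewrite lexx ltr01.
    rewrite invr_ge0 ler0n; split => //.
    by rewrite invf_lt1 ?ltr0n // ltr1n.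
  move=> j; rewrite dmx_mul mxE; case: (j =P j0) => [->|_].
    by rewrite d0 mulr0 rpred0.
  by rewrite mul0r rpred0.
apply: (sub_infinite_set fS).
rewrite (eq_finite_set (inj_card_eq _)); first exact: infinite_nat.
move=> a b _ _ /(congr1 (fun v : 'rV[R]_m => v 0 j0)); rewrite !mxE eqxx.
by move/invr_inj/eqP; rewrite eqr_nat !eqSS => /eqP.
Qed.

Lemma card_setT_ord (T : finType) : [set: T] #= `I_#|T|.
Proof.
apply: card_eq_trans (card_esym card_II).
by apply: (@card_eq_inv _ _ _ _ enum_rank enum_val) => // x _; rewrite ?enum_rankK ?enum_valK.
Qed.

Lemma SS_diag_fin m (d : seq int) : (forall j : 'I_m, d`_j != 0) ->
  SS (dmx m d) #= `I_(\prod_(j < m) `|(d`_j)%R|%N).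
Proof.
move=> dn0.
pose e (j : 'I_m) := `|(d`_j)%R|%N.
have e0 j : (0 < e j)%N by rewrite absz_gt0.
pose T := {dffun forall j : 'I_m, 'I_((e j).-1.+1)}.
pose h (k : T) : 'rV[R]_m := \row_j ((k j)%:R / (e j)%:R).
have eR j : (e j)%:R != 0 :> R by rewrite pnatr_eq0 -lt0n.
have dE (j : 'I_m) : ((d`_j)%:~R : R) = (sgz (d`_j))%:~R * (e j)%:R.
  by rewrite {1}[d`_j]intEsg intrM.
have -> : SS (dmx m d) = h @` [set: T].
  apply/seteqP; split => [y [ty iy]|_ [k _ <-]].
    have z_int (j : 'I_m) : y 0 j * (e j)%:R \is a Num.int.
      have := iy j; rewrite dmx_mul dE => hi.
      have -> : y 0 j * (e j)%:R = y 0 j * ((sgz d`_j)%:~R * (e j)%:R) * (sgz d`_j)%:~R.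
        have ss : (sgz d`_j)%:~R * (sgz d`_j)%:~R = 1 :> R.
          by rewrite -intrM mulz_sg (negbTE (dn0 j)).
        transitivity (y 0 j * (e j)%:R * ((sgz d`_j)%:~R * (sgz d`_j)%:~R)).
          by rewrite ss mulr1.
        ring.
      by rewrite rpredM // intr_int.
    pose g (j : 'I_m) := `|Num.floor (y 0 j * (e j)%:R)%R|%N.
    have gE (j : 'I_m) : (g j)%:R = y 0 j * (e j)%:R.
      rewrite /g natr_absz ger0_norm ?floorK //.
      by rewrite floor_ge0 mulr_ge0 // ?ler0n; case: (ty j).
    have gl j : (g j < (e j).-1.+1)%N.
      rewrite prednK // -(ltr_nat R) gE gtr_pMl ?ltr0n //.
      by case: (ty j).
    exists (finfun (fun j => (inord (g j) : 'I_((e j).-1.+1))) : T) => //.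
    apply/matrixP => i j; rewrite [i]ord1 !mxE ffunE inordK // gE.
    by rewrite -mulrA divff ?mulr1 // eR.
  split.
    move=> j; rewrite mxE divr_ge0 ?ler0n //; split => //.
    rewrite ltr_pdivrMr ?ltr0n // mul1r ltr_nat -[X in (_ < X)%N]prednK //.
  move=> j; rewrite dmx_mul mxE dE mulrCA mulfVK // rpredM //.
    exact: intr_int.
  by rewrite -[(k j)%:R]/((Posz (k j))%:~R) intr_int.
rewrite (card_eql (inj_card_eq _)); last first.
  move=> k k' _ _ hk; apply/ffunP => j; apply/val_inj.
  have /(congr1 (fun v : 'rV[R]_m => v 0 j)) := hk; rewrite !mxE.
  move/(congr1 (fun t => t * (e j)%:R)); rewrite !mulfVK //.
  by move/eqP; rewrite eqr_nat => /eqP.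
apply: card_eq_trans (card_setT_ord T) _.
rewrite card_dep_ffun; apply/card_eq_II.
rewrite foldrE big_map big_enum /=; apply: eq_bigr => j _.
by rewrite card_ord prednK.
Qed.
End Diag.
Lemma abs_det_unit m (L : 'M[int]_m) : L \in unitmx -> `|\det L|%N = 1%N.
Proof.
rewrite unitmxE => /unitrPr [y /(congr1 absz)]; rewrite abszM /=.
by move/eqP; rewrite muln_eq1 => /andP[/eqP -> _].
Qed.

Lemma det_dmx m (d : seq int) : \det (dmx m d) = \prod_(j < m) d`_j.
Proof.
have -> : dmx m d = diag_mx (\row_i d`_i).
  apply/matrixP => i k; rewrite !mxE; case: (i =P k) => [->|ne].
    by rewrite eqxx.
  by have /negbTE -> : (i : nat) != k by apply/eqP => /val_inj.
by rewrite det_diag; apply: eq_bigr => j _; rewrite mxE.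
Qed.

Lemma SS_count (R : realType) m (M : 'M[int]_m) :
  (\det M != 0 -> @SS R m M #= `I_(`|\det M|%N)) /\ (\det M = 0 -> infinite_set (@SS R m M)).
Proof.
have [L uL [Rr uR [d _ ->]]] := int_Smith_normal_form M.
have -> : (\matrix_(i, j) (d`_i *+ (i == j :> nat))) = dmx m d by [].
rewrite SS_right // !det_mulmx det_dmx (card_eql (@SS_left R _ _ (dmx m d) uL)) (eq_finite_set (@SS_left R _ _ (dmx m d) uL)).
split.
  move=> hM; have dn0 (j : 'I_m) : d`_j != 0.
    apply: contraNneq hM => dj0.
    by rewrite (bigD1 j) //= dj0 mul0r mulr0 mul0r.
  apply: card_eq_trans (SS_diag_fin R dn0) _; apply/card_eq_II.
  rewrite !abszM abs_det_unit // abs_det_unit // mul1n muln1.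
  by rewrite (big_morph (fun z : int => `|z|%N) abszM (erefl _)).
have nz (P : 'M[int]_m) : P \in unitmx -> \det P != 0.
  by move=> /abs_det_unit h; apply/eqP => e; rewrite e in h.
move=> /eqP; rewrite !mulf_eq0 (negbTE (nz _ uL)) (negbTE (nz _ uR)) /= orbF.
move=> /prodf_eq0 [j _ /eqP dj0].
exact: SS_diag_inf dj0.
Qed.
Section Alg.
Variables (Gam : groupType) (G : finGroupType) (phi : Gam -> G) (r : nat) (f : ZGmat Gam r).

Definition bK (K : fieldType) : G -> 'M[K]_r :=
  fun g => \sum_(p <- f | phi p.1 == g) map_mx (fun z : int => z%:~R) p.2.

Definition Mint : 'M[int]_#|{: 'I_r * G}| :=
  \matrix_(i, i') (let p := enum_val i in let q := enum_val i' in
     \sum_(s <- f | phi s.1 == (q.2^-1 * p.2)%g) s.2 q.1 p.1).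

Lemma bK_rat : bK rat = ftilde phi f.
Proof. by []. Qed.

Lemma rho_coord (K : fieldType) (v : 'rV[K]_#|{: 'I_r * G}|) :
  ga_coord (rho (bK K) (ga_uncoord v)) = v *m map_mx (fun z : int => z%:~R) Mint.
Proof.
apply/matrixP => i i'; rewrite [i]ord1 !mxE.
set q := enum_val i'.
rewrite (eq_bigr (fun i0 => v 0 (enum_rank (enum_val i0)) *
   ((Mint (enum_rank (enum_val i0)) i')%:~R))); last first.
  by move=> i0 _; rewrite enum_valK mxE.
rewrite -(big_enum_val (A := {: 'I_r * G}) (fun t => v 0 (enum_rank t) * (Mint (enum_rank t) i')%:~R)).
pose F (j : 'I_r) (g : G) := v 0 (enum_rank (j, g)) * (Mint (enum_rank (j, g)) i')%:~R.
rewrite (eq_bigl (fun p : 'I_r * G => xpredT p.1 && xpredT p.2)) //.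
rewrite (eq_bigr (fun p => F p.1 p.2)); last by move=> [j g].
transitivity (\sum_(j : 'I_r) \sum_(g : G) F j g); last by rewrite pair_big.
rewrite /F /rho /=.
apply: eq_bigr => j _; rewrite /ga_mul; apply: eq_bigr => g _.
rewrite /ga_uncoord /hstar !mxE enum_rankK /= -/q.
congr (_ * _); rewrite invMg invgK /bK summxE.
rewrite (big_morph (fun z : int => (z%:~R : K)) (@intrD K) (mulr0z 1)).
by apply: eq_bigr => s _; rewrite mxE.
Qed.
End Alg.
Section Alg2.
Variables (Gam : groupType) (G : finGroupType) (phi : Gam -> G) (r : nat) (f : ZGmat Gam r).
Notation mi := (map_mx (fun z : int => z%:~R)).

Lemma coordK (K : fieldType) (x : 'I_r -> G -> K) : ga_uncoord (ga_coord x) = x.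
Proof.
apply: funext => j; apply: funext => g.
by rewrite /ga_uncoord /ga_coord mxE enum_rankK.
Qed.

Lemma uncoordK (K : fieldType) (v : 'rV[K]_#|{: 'I_r * G}|) : ga_coord (ga_uncoord v) = v.
Proof.
apply/matrixP => i j; rewrite [i]ord1 /ga_uncoord /ga_coord mxE.
by rewrite -(surjective_pairing (enum_val j)) enum_valK.
Qed.

Lemma rho_mx (K : fieldType) (x : 'I_r -> G -> K) :
  rho (bK phi f K) x = ga_uncoord (ga_coord x *m mi (Mint phi f)).
Proof. by rewrite -rho_coord !coordK. Qed.

Lemma det_rho_Mint : det_rho (ftilde phi f) = (\det (Mint phi f))%:~R.
Proof.
rewrite /det_rho -bK_rat.
have -> : lin1_mx (fun v => ga_coord (rho (bK phi f rat) (ga_uncoord v))) = mi (Mint phi f).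
  apply/matrixP => i j; rewrite mxE rho_coord -rowE mxE.
  by rewrite mxE.
by rewrite (det_map_mx (intr : {rmorphism int -> rat})).
Qed.

Lemma rho_bij : bijective (rho (ftilde phi f)) <-> \det (Mint phi f) != 0.
Proof.
have detE : \det (mi (Mint phi f) : 'M[rat]_#|{: 'I_r * G}|) = (\det (Mint phi f))%:~R.
  by rewrite (det_map_mx (intr : {rmorphism int -> rat})).
rewrite -bK_rat; split.
  move=> [g rg gr]; apply/negP => /eqP d0.
  have : \det (mi (Mint phi f) : 'M[rat]_#|{: 'I_r * G}|) == 0 by rewrite detE d0.
  move/det0P => [v vn0 vM].
  have e : rho (bK phi f rat) (ga_uncoord v) = rho (bK phi f rat) (ga_uncoord 0).
    by rewrite !rho_mx !uncoordK vM mul0mx.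
  have := congr1 g e; rewrite !rg => /(congr1 (@ga_coord rat G r)); rewrite !uncoordK => v0.
  by rewrite v0 eqxx in vn0.
move=> dn0.
have uM : (mi (Mint phi f) : 'M[rat]_#|{: 'I_r * G}|) \in unitmx.
  by rewrite unitmxE detE unitfE intr_eq0.
exists (fun x => ga_uncoord (ga_coord x *m invmx (mi (Mint phi f)))) => x.
  by rewrite rho_mx uncoordK mulmxK // coordK.
by rewrite rho_mx uncoordK mulmxKV // coordK.
Qed.
End Alg2.
Section Real.
Variables (Gam : groupType) (G : finGroupType) (phi : Gam -> G)
  (phiM : forall a b : Gam, phi (a * b)%g = (phi a * phi b)%g) (r : nat) (f : ZGmat Gam r).
Notation mi := (map_mx (fun z : int => z%:~R)).

Lemma rho_sum (K : fieldType) (x : Gam -> 'rV[K]_r) (y : 'I_r -> G -> K)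
  (hxy : forall c j, x c 0 j = y j (phi c)) (c : Gam) (k : 'I_r) :
  rho (bK phi f K) y k (phi c) = (\sum_(p <- f) x (c * p.1)%g *m (mi p.2)^T) 0 k.
Proof.
rewrite /rho summxE.
rewrite (eq_bigr (fun p : Gam * 'M[int]_r => \sum_j y j (phi c * phi p.1)%g * (p.2 k j)%:~R)); last first.
  by move=> p _; rewrite mxE; apply: eq_bigr => j _; rewrite !mxE hxy phiM.
rewrite [RHS]exchange_big /=; apply: eq_bigr => j _.
rewrite /ga_mul.
rewrite (eq_bigr (fun g => \sum_(s <- f) (if phi s.1 == ((phi c)^-1 * g)%g
     then y j g * (s.2 k j)%:~R else 0))); last first.
  move=> g _; rewrite /hstar mxE invMg invgK /bK summxE mulr_sumr big_mkcond /=.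
  by apply: eq_bigr => s _; rewrite mxE.
rewrite exchange_big /=; apply: eq_bigr => s _.
rewrite (bigD1 (phi c * phi s.1)%g) //= mulKg eqxx big1 ?addr0 // => g ne.
case: eqP => // e; move: ne; rewrite e mulKVg eqxx //.
Qed.
End Real.
Section Real2.
Variables (Gam : groupType) (G : finGroupType) (phi : Gam -> G)
  (phiM : forall a b : Gam, phi (a * b)%g = (phi a * phi b)%g)
  (phi_surj : forall g : G, exists a : Gam, phi a = g)
  (N : set Gam) (HN : forall n : Gam, N n <-> phi n = 1%g)
  (r : nat) (f : ZGmat Gam r).
Notation mi := (map_mx (fun z : int => z%:~R)).

Lemma phi1 : phi 1%g = 1%g.
Proof.
have := phiM 1 1; rewrite mulg1 => h.
by apply: (mulgI (phi 1%g)); rewrite -h mulg1.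
Qed.

Lemma phiV a : phi a^-1%g = (phi a)^-1%g.
Proof.
apply/esym/mulg1_eq; rewrite -phiM mulgV; exact: phi1.
Qed.

Definition sec (g : G) : Gam := projT1 (cid (phi_surj g)).
Lemma secP g : phi (sec g) = g.
Proof. exact: (projT2 (cid (phi_surj g))). Qed.

Lemma fix_sec (R : realType) (x : Gam -> 'rV[R]_r) :
  FixN N (Xf f) x -> forall c, x (sec (phi c)) = x c.
Proof.
move=> [_ hx] c.
have Nn : N (c * (sec (phi c))^-1)%g.
  by apply/HN; rewrite phiM phiV secP mulgV.
have := hx _ Nn c; rewrite invMg invgK -mulgA mulVg mulg1 => ->.
by [].
Qed.

Lemma Fix_SS (R : realType) : FixN N (Xf (R:=R) f) #= @SS R _ (Mint phi f).
Proof.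
pose Fx (x : Gam -> 'rV[R]_r) := ga_coord (fun j g => x (sec g) 0 j).
pose Gv (v : 'rV[R]_#|{: 'I_r * G}|) := fun c => \row_j (ga_uncoord v j (phi c)).
apply: (@card_eq_inv _ _ _ _ Fx Gv).
- move=> x xF; split.
    move=> i; rewrite /Fx /ga_coord mxE; exact: (xF.1.1 (sec _)).
  move=> i'; rewrite -rho_coord coordK /ga_coord mxE /=.
  rewrite -{1}(secP (enum_val i').2) (rho_sum phiM f (x := x)).
    exact: (xF.1.2 (sec _)).
  by move=> c j; rewrite -(fix_sec xF c).
- move=> v [tv hv]; split; first split.
  + by move=> c j; rewrite mxE /ga_uncoord; exact: tv.
  + move=> c j; rewrite -(rho_sum phiM f (y := ga_uncoord v)); last by move=> c' j'; rewrite mxE.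
    have -> : rho (bK phi f R) (ga_uncoord v) j (phi c) =
       (ga_coord (rho (bK phi f R) (ga_uncoord v))) 0 (enum_rank (j, phi c)).
      by rewrite /ga_coord mxE enum_rankK.
    by rewrite rho_coord; exact: hv.
  + move=> n Nn c; apply/matrixP => i j; rewrite !mxE phiM phiV (proj1 (HN n) Nn).
    by rewrite invg1 mul1g.
- move=> x xF; apply: funext => c; apply/matrixP => i j.
  by rewrite [i]ord1 mxE /ga_uncoord /Fx /ga_coord mxE enum_rankK /= fix_sec.
- move=> v _; rewrite /Fx.
  have -> : (fun j g => Gv v (sec g) 0 j) = ga_uncoord v.
    by apply: funext => j; apply: funext => g; rewrite mxE secP.
  exact: uncoordK.
Qed.
End Real2.
Unset Implicit Arguments.

Theorem proposition2p1 (R : realType) (Gam : groupType) (G : finGroupType)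
  (phi : Gam -> G)
  (phiM : forall a b : Gam, phi (a * b)%g = (phi a * phi b)%g)
  (phi_surj : forall g : G, exists a : Gam, phi a = g)
  (N : set Gam) (HN : forall n : Gam, N n <-> phi n = 1%g)
  (r : nat) (hr : (0 < r)%N) (f : ZGmat Gam r) :
  (bijective (rho (ftilde phi f)) <-> finite_set (FixN N (Xf (R:=R) f))) /\
  (finite_set (FixN N (Xf (R:=R) f)) ->
     exists n : nat, (FixN N (Xf (R:=R) f) #= `I_n) /\
       ((n%:R : rat) = det_rho (ftilde phi f) \/ (n%:R : rat) = - det_rho (ftilde phi f))).
Proof.
have hFS := @Fix_SS Gam G phi phiM phi_surj N HN r f R.
have [cnt inf] := SS_count R (Mint phi f).
have finE : finite_set (FixN N (Xf (R:=R) f)) <-> \det (Mint phi f) != 0.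
  split.
    move=> fin; apply/eqP => d0; apply: (inf d0).
    by rewrite -(eq_finite_set hFS).
  move=> dn0; rewrite (eq_finite_set hFS); exists `|\det (Mint phi f)|%N.
  exact: cnt dn0.
have bE := @rho_bij Gam G phi r f.
split.
  split => h; [apply/finE/bE | apply/bE/finE] => //.
move=> /finE dn0; exists `|\det (Mint phi f)|%N; split.
  exact: card_eq_trans hFS (cnt dn0).
rewrite det_rho_Mint natr_absz.
have [h|h] := lerP 0 (\det (Mint phi f)).
  by left; rewrite ger0_norm.
by right; rewrite ltr0_norm // mulrNz.
Qed.
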